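(* Let $\mathcal D=(A,D)$ be a dependence alphabet, $\mathcal P=(Q,\Delta)$ a saturated trace-pushdown system, and $c,d$ configurations of $\mathcal P$ with $c\vdash^*_{\mathcal P}d$. Then there exist $m\le\mathrm{TI}(\mathcal D)$ and a sequence $\overline T=(T_1,\ldots,T_m)$ of twin classes $T_i\in\mathrm{twins}(\mathcal D)$ such that $(c,d)\in\ \Vdash_{\overline T}\circ\vdash_\varepsilon^*$.
   Context: A dependence alphabet is $\mathcal D=(A,D)$, $A$ finite, $D\subseteq A\times A$ reflexive and symmetric. $D(B)=\{c\mid\exists b\in B:(b,c)\in D\}$, $D(a)=D(\{a\})$, $D(w)=D(\text{letters of }w)$. Letters $a,b$ independent if $(a,b)\notin D$; $u\parallel v$ if every letter of $u$ is independent of every letter of $v$. $\sim$ is the least congruence on $A^*$ with $ab\sim ba$ for independent $a,b$; $\mathbb M(\mathcal D)=A^*/{\sim}$, $[w]$ the class of $w$. $\mathrm{twins}(a)=\{b\mid D(b)=D(a)\}$, $\mathrm{twins}(\mathcal D)=\{\mathrm{twins}(a)\mid a\in A\}$, $\mathrm{TI}(\mathcal D)=|\mathrm{twins}(\mathcal D)|$. A pushdown system $\mathcal P=(Q,\Delta)$, $Q$ finite, $\Delta\subseteq Q\times A\times A^*\times Q$ finite; configurations $Q\times\mathbb M(\mathcal D)$; $(p,s)\vdash_{\mathcal P}(q,t)$ iff there are $(p,a,w,q)\in\Delta$, $x\in A^*$ with $s=[ax]$, $t=[wx]$. It is a trace-pushdown system if (P1) $D(w)\subseteq D(a)$ for all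 $(p,a,w,q)\in\Delta$ and (P2') whenever $(p,a,v,q),(q,b,w,r)\in\Delta$ with $av\parallel bw$ there is $q'$ with $(p,b,w,q'),(q',a,v,r)\in\Delta$. It is saturated if $(p,a,ubv,q),(q,b,\varepsilon,r)\in\Delta$ with $b\in A$, $u,v\in A^*$, $u\parallel b$ implies $(p,a,uv,r)\in\Delta$. Let $\Delta_\varepsilon=\Delta\cap(Q\times A\times\{\varepsilon\}\times Q)$ and, for $T\in\mathrm{twins}(\mathcal D)$, $\Delta_T=\Delta\cap(Q\times T\times A^+\times Q)$; $\vdash_\varepsilon$ and $\vdash_T$ are the one-step relations of $(Q,\Delta_\varepsilon)$ and $(Q,\Delta_T)$. Relations are composed left to right ($R_1\circ R_2=\{(x,z)\mid\exists y:(x,y)\in R_1,(y,z)\in R_2\}$). Define $\Vdash_T=\vdash_\varepsilon^*\circ\vdash_T^+$ and $\Vdash_{(T_1,\ldots,T_m)}=\Vdash_{T_1}\circ\cdots\circ\Vdash_{T_m}$ (the identity relation if $m=0$). *)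

(* Defs.v *)
From mathcomp Require Import all_boot.
Set Implicit Arguments. Unset Strict Implicit. Unset Printing Implicit Defensive.

Section TracePushdown.
Variables (A Q : finType) (D : rel A).

Definition par (u v : seq A) : bool := all (fun x => all (fun y => ~~ D x y) v) u.

Inductive tr : seq A -> seq A -> Prop :=
| tr_swap a b : ~~ D a b -> tr [:: a; b] [:: b; a]
| tr_refl u : tr u u
| tr_sym u v : tr u v -> tr v u
| tr_trans u v w : tr u v -> tr v w -> tr u w
| tr_cat u u' v v' : tr u u' -> tr v v' -> tr (u ++ v) (u' ++ v').

Definition Dset (w : seq A) : pred A := fun c => has (fun b => D b c) w.

Definition rule := (Q * A * seq A * Q)%type.

(* configurations: a state and a word representing a trace; two representatives
   denote the same configuration iff [confeq] *)
Definition conf := (Q * seq A)%type.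
Definition confeq (c d : conf) : Prop := c.1 = d.1 /\ tr c.2 d.2.

Definition step (Delta : seq rule) (c d : conf) : Prop :=
  exists a w x, (c.1, a, w, d.1) \in Delta /\ tr c.2 (a :: x) /\ tr d.2 (w ++ x).

Inductive star (R : conf -> conf -> Prop) : conf -> conf -> Prop :=
| star_refl c d : confeq c d -> star R c d
| star_step c e d : R c e -> star R e d -> star R c d.

Definition rplus (R : conf -> conf -> Prop) (c d : conf) : Prop :=
  exists e, R c e /\ star R e d.

Definition rcomp (R1 R2 : conf -> conf -> Prop) (c d : conf) : Prop :=
  exists e, R1 c e /\ R2 e d.

Definition trace_pushdown (Delta : seq rule) : Prop :=
  (forall p a w q, (p, a, w, q) \in Delta -> forall c, Dset w c -> D a c) /\
  (forall p a v q b w r, (p, a, v, q) \in Delta -> (q, b, w, r) \in Delta ->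
     par (a :: v) (b :: w) ->
     exists q', (p, b, w, q') \in Delta /\ (q', a, v, r) \in Delta).

Definition saturated (Delta : seq rule) : Prop :=
  forall p a u b v q r, (p, a, u ++ b :: v, q) \in Delta -> (q, b, [::], r) \in Delta ->
    par u [:: b] -> (p, a, u ++ v, r) \in Delta.

Definition twins (a : A) : {set A} := [set b | [forall c, D b c == D a c]].
Definition twinsD : {set {set A}} := [set twins a | a in A].
Definition TI : nat := #|twinsD|.

Definition Delta_eps (Delta : seq rule) : seq rule :=
  [seq r <- Delta | r.1.2 == [::]].
Definition Delta_T (Delta : seq rule) (T : {set A}) : seq rule :=
  [seq r <- Delta | (r.1.1.2 \in T) && (r.1.2 != [::])].

Definition step_eps Delta := step (Delta_eps Delta).
Definition step_T Delta T := step (Delta_T Delta T).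

Definition Vdash (Delta : seq rule) (T : {set A}) : conf -> conf -> Prop :=
  rcomp (star (step_eps Delta)) (rplus (step_T Delta T)).

Fixpoint Vdash_seq (Delta : seq rule) (Ts : seq {set A}) : conf -> conf -> Prop :=
  match Ts with
  | [::] => confeq
  | T :: Ts' => rcomp (Vdash Delta T) (Vdash_seq Delta Ts')
  end.

End TracePushdown.

(* Main.v *)
Require Import Defs.
From mathcomp Require Import all_boot.
From Stdlib Require Import Classical.
Set Implicit Arguments. Unset Strict Implicit. Unset Printing Implicit Defensive.

Section Trace.
Variables (X : eqType) (DX : rel X).
Hypotheses (DXr : reflexive DX) (DXs : symmetric DX).

Definition peq (u v : seq X) :=
  forall x y, DX x y -> filter (pred2 x y) u = filter (pred2 x y) v.

Lemma peq_refl u : peq u u. Proof. by []. Qed.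
Lemma peq_sym u v : peq u v -> peq v u. Proof. by move=> h x y d; rewrite h. Qed.
Lemma peq_trans u v w : peq u v -> peq v w -> peq u w.
Proof. by move=> h1 h2 x y d; rewrite h1 // h2. Qed.
Lemma peq_cat u u' v v' : peq u u' -> peq v v' -> peq (u ++ v) (u' ++ v').
Proof. by move=> h1 h2 x y d; rewrite !filter_cat h1 // h2. Qed.
Lemma peq_cons a u v : peq u v -> peq (a :: u) (a :: v).
Proof. by move=> h; apply: (@peq_cat [:: a] [:: a]). Qed.
Lemma peq_consK a u v : peq (a :: u) (a :: v) -> peq u v.
Proof. by move=> h x y d; have := h x y d => /=; case: ifP => // _ [->]. Qed.

Lemma peq_swap a b u : ~~ DX a b -> peq (a :: b :: u) (b :: a :: u).
Proof.
move=> nab x y dxy /=.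
case Ha: ((a == x) || (a == y)); case Hb: ((b == x) || (b == y)) => //.
exfalso; move: nab Ha Hb.
move=> nab /orP[/eqP ea|/eqP ea] /orP[/eqP eb|/eqP eb]; subst a b;
  by rewrite ?DXr ?dxy ?(DXs y x) ?dxy in nab.
Qed.

Lemma peq_bubble a u v : all (fun z => ~~ DX a z) u -> peq (u ++ a :: v) (a :: u ++ v).
Proof.
elim: u => [|z u IH] //= /andP[nz hu].
apply: peq_trans (peq_cons z (IH hu)) _.
by apply: peq_sym; apply: peq_swap.
Qed.

Lemma peq_catC u v : all (fun x => all (fun y => ~~ DX x y) v) u -> peq (u ++ v) (v ++ u).
Proof.
elim: u => [|x u IH] /=; first by rewrite cats0.
case/andP=> hx hu; apply: peq_trans (peq_cons x (IH hu)) _.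
by apply: peq_sym; apply: peq_bubble.
Qed.

Lemma peq_perm u v : peq u v -> perm_eq u v.
Proof.
move=> h; apply/allP=> z _; apply/eqP.
have e: forall s, count_mem z s = size (filter (pred2 z z) s).
  by move=> s; rewrite size_filter; apply: eq_count => w /=; rewrite orbb.
by rewrite !e h.
Qed.

Lemma peq_mem u v : peq u v -> u =i v.
Proof. by move/peq_perm/perm_mem. Qed.

Lemma split_first (b : X) s : b \in s -> exists s1 s2, s = s1 ++ b :: s2 /\ b \notin s1.
Proof.
elim: s => [|y s IH] //=; rewrite in_cons.
case: (eqVneq b y) => [->|nby] /= h; first by exists [::], s.
have [s1 [s2 [-> n1]]] := IH h.
by exists (y :: s1), s2; rewrite in_cons negb_or nby.
Qed.

Lemma filter_nil (p : pred X) s : (forall x, x \in s -> ~~ p x) -> filter p s = [::].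
Proof.
move=> h; rewrite -(filter_pred0 s); apply: eq_in_filter => x /h /negbTE ->; done.
Qed.

Lemma peq_extract u Y b Z : peq (u ++ Y) (b :: Z) -> b \notin u ->
  exists Y1 Y2, [/\ Y = Y1 ++ b :: Y2, b \notin Y1, all (fun z => ~~ DX b z) (u ++ Y1)
                & peq Z (u ++ Y1 ++ Y2)].
Proof.
move=> h nbu.
have: b \in u ++ Y by rewrite (peq_mem h) mem_head.
rewrite mem_cat (negbTE nbu) /= => /split_first [Y1 [Y2 [eY nb1]]].
have nbl : b \notin u ++ Y1 by rewrite mem_cat negb_or nbu.
have hall : all (fun z => ~~ DX b z) (u ++ Y1).
  apply/allP=> z zl; apply/negP=> dbz.
  have [l1 [l2 [el nz1]]] := split_first zl.
  have := h b z dbz; rewrite eY catA el -catA /= filter_cat.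
  rewrite (@filter_nil _ l1); last first.
    move=> w wl1 /=; apply/negP=> /orP[/eqP ew|/eqP ew].
      by move: nbl; rewrite el mem_cat -ew wl1.
    by move: nz1; rewrite -ew wl1.
  rewrite /= eqxx orbT /= eqxx /= => -[ezb].
  by move: nbl; rewrite -ezb zl.
exists Y1, Y2; split => //.
have e1: peq (u ++ Y) (b :: (u ++ Y1) ++ Y2).
  by rewrite eY catA; apply: peq_bubble.
apply: peq_sym; rewrite catA; apply: peq_consK (peq_trans (peq_sym e1) h).
Qed.

Inductive trg : seq X -> seq X -> Prop :=
| trg_swap a b : ~~ DX a b -> trg [:: a; b] [:: b; a]
| trg_refl u : trg u u
| trg_sym u v : trg u v -> trg v u
| trg_trans u v w : trg u v -> trg v w -> trg u w
| trg_cat u u' v v' : trg u u' -> trg v v' -> trg (u ++ v) (u' ++ v').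

Lemma trg_peq u v : trg u v -> peq u v.
Proof.
elim=> {u v} [a b n|u|u v _ h|u v w _ h1 _ h2|u u' v v' _ h1 _ h2].
- exact: (peq_swap [::] n).
- exact: peq_refl.
- exact: peq_sym.
- exact: peq_trans h1 h2.
- exact: peq_cat.
Qed.

Lemma trg_bubble a u v : all (fun z => ~~ DX a z) u -> trg (a :: u ++ v) (u ++ a :: v).
Proof.
elim: u => [|z u IH] /=; first by move=> _; apply: trg_refl.
case/andP=> nz hu; apply: trg_trans (_ : trg (z :: a :: u ++ v) _).
  by apply: (@trg_cat [:: a; z] [:: z; a]); [apply: trg_swap|apply: trg_refl].
exact: (@trg_cat [:: z] [:: z] _ _ (trg_refl _) (IH hu)).
Qed.

Lemma peq_trg u v : peq u v -> trg u v.
Proof.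
elim: u v => [|a u IH] v h.
  by have := peq_perm h; rewrite perm_sym => /perm_nilP ->; apply: trg_refl.
have [//|Y1 [Y2 [-> _ hall hz]]] := @peq_extract [::] v a u (peq_sym h).
apply: trg_trans (_ : trg (a :: Y1 ++ Y2) _); last exact: trg_bubble.
exact: (@trg_cat [:: a] [:: a] _ _ (trg_refl _) (IH _ hz)).
Qed.

End Trace.


Section Runs.
Variables (A Q : finType) (D : rel A).
Hypotheses (Drefl : reflexive D) (Dsym : symmetric D).
Variable Delta : seq (rule A Q).
Hypothesis Htp : trace_pushdown D Delta.
Hypothesis Hsat : saturated D Delta.

Definition occ := (A * nat)%type.
Definition DL : rel occ := fun x y => D x.1 y.1.
Lemma DLr : reflexive DL. Proof. by move=> x; apply: Drefl. Qed.
Lemma DLs : symmetric DL. Proof. by move=> x y; apply: Dsym. Qed.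
Notation peqL := (peq DL).
Notation peqA := (peq D).

Definition lconf := (Q * seq occ)%type.
Definition lstep := (rule A Q * occ * seq occ)%type.
Definition srule (s : lstep) : rule A Q := s.1.1.
Definition socc (s : lstep) : occ := s.1.2.
Definition sW (s : lstep) : seq occ := s.2.
Definition key (s : lstep) := (socc s, sW s).

Definition lstepR (C : lconf) (s : lstep) (C' : lconf) :=
  [/\ srule s \in Delta, srule s = (C.1, (socc s).1, map fst (sW s), C'.1) &
      exists Xs, peqL C.2 (socc s :: Xs) /\ peqL C'.2 (sW s ++ Xs)].

Definition ceq (C C' : lconf) := C.1 = C'.1 /\ peqL C.2 C'.2.

Inductive lrun : lconf -> seq lstep -> lconf -> Prop :=
| lrun_nil C C' : ceq C C' -> lrun C [::] C'
| lrun_cons C C1 C' s ss : lstepR C s C1 -> lrun C1 ss C' -> lrun C (s :: ss) C'.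

Lemma ceq_refl C : ceq C C. Proof. by split. Qed.
Lemma ceq_sym C C' : ceq C C' -> ceq C' C.
Proof. by case=> h1 h2; split; [rewrite h1|apply: peq_sym]. Qed.
Lemma ceq_trans C1 C2 C3 : ceq C1 C2 -> ceq C2 C3 -> ceq C1 C3.
Proof. by case=> h1 h2 [h3 h4]; split; [rewrite h1|apply: peq_trans h4]. Qed.

Lemma lrun_nilE C C' : lrun C [::] C' -> ceq C C'.
Proof. by move=> h; inversion h. Qed.
Lemma lrun_consE C s ss C' : lrun C (s :: ss) C' -> exists C1, lstepR C s C1 /\ lrun C1 ss C'.
Proof. by move=> h; inversion h; subst; exists C1. Qed.

Lemma lstepR_start C0 C s C1 : ceq C0 C -> lstepR C s C1 -> lstepR C0 s C1.
Proof.
case=> e1 e2 [h1 h2 [Xs [h3 h4]]]; split=> //; first by rewrite e1.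
by exists Xs; split=> //; apply: peq_trans h3.
Qed.
Lemma lstepR_end C s C1 C2 : lstepR C s C1 -> ceq C1 C2 -> lstepR C s C2.
Proof.
case=> h1 h2 [Xs [h3 h4]] [e1 e2]; split=> //; first by rewrite -e1.
by exists Xs; split=> //; apply: peq_trans (peq_sym e2) h4.
Qed.

Lemma lrun_start C0 C ss C' : ceq C0 C -> lrun C ss C' -> lrun C0 ss C'.
Proof.
move=> e h; case: h e => [C1 C2 e2 e1|C1 C2 C3 s ss' h1 h2 e].
  by apply: lrun_nil; apply: ceq_trans e1 e2.
by apply: lrun_cons (lstepR_start e h1) h2.
Qed.
Lemma lrun_end C ss C1 C2 : lrun C ss C1 -> ceq C1 C2 -> lrun C ss C2.
Proof.
elim=> [Ca Cb e|Ca Cb Cc s ss' h1 h2 IH] e'.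
  by apply: lrun_nil; apply: ceq_trans e e'.
by apply: lrun_cons h1 (IH e').
Qed.

Lemma lrun_cat C s1 s2 C' :
  lrun C (s1 ++ s2) C' <-> exists Cm, lrun C s1 Cm /\ lrun Cm s2 C'.
Proof.
split.
  elim: s1 C => [|s s1 IH] C /=.
    by move=> h; exists C; split=> //; apply: lrun_nil; apply: ceq_refl.
  case/lrun_consE=> C1 [h1 /IH [Cm [h2 h3]]].
  by exists Cm; split=> //; apply: lrun_cons h1 h2.
case=> Cm [h1 h2]; elim: s1 C h1 => [|s s1 IH] C /= h1.
  by apply: lrun_start h2; apply: lrun_nilE.
case/lrun_consE: h1 => C1 [h3 h4]; apply: lrun_cons h3 (IH _ h4).
Qed.

Lemma lstep_det C s C1 C2 : lstepR C s C1 -> lstepR C s C2 -> ceq C1 C2.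
Proof.
case=> h1 h2 [X1 [h3 h4]] [_ h5 [X2 [h6 h7]]]; split.
  by move: h5; rewrite h2 => -[].
apply: peq_trans h4 _; apply: peq_trans _ (peq_sym h7); apply: peq_cat; first exact: peq_refl.
by apply: (@peq_consK _ _ (socc s)); apply: peq_trans (peq_sym h3) h6.
Qed.

Lemma lrun_det C ss C1 C2 : lrun C ss C1 -> lrun C ss C2 -> ceq C1 C2.
Proof.
move=> h; elim: h C2 => [Ca Cb e|Ca Cb Cc s ss' h1 h2 IH] C2.
  by move/lrun_nilE; apply: ceq_trans; apply: ceq_sym.
case/lrun_consE=> C1' [h3 h4]; apply: IH; apply: lrun_start h4.
exact: lstep_det h1 h3.
Qed.

Definition fresh (C : lconf) (ss : seq lstep) := uniq (C.2 ++ flatten (map sW ss)).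

Lemma lstep_uniq C s C1 rest : lstepR C s C1 -> uniq (C.2 ++ sW s ++ rest) -> uniq (C1.2 ++ rest).
Proof.
case=> _ _ [Xs [h1 h2]] u.
have p1 := peq_perm DLr h1; have p2 := peq_perm DLr h2.
rewrite (perm_uniq (perm_cat p2 (perm_refl rest))) -catA.
rewrite (perm_uniq (perm_cat p1 (perm_refl _))) /= in u.
by case/andP: u => _; rewrite uniq_catCA.
Qed.

Lemma fresh_cons C s ss C1 : lstepR C s C1 -> fresh C (s :: ss) -> fresh C1 ss.
Proof. by move=> h; rewrite /fresh /= => u; apply: lstep_uniq h u. Qed.

Lemma fresh_catR C pre post Cm : lrun C pre Cm -> fresh C (pre ++ post) -> fresh Cm post.
Proof.
elim: pre C => [|s pre IH] C /=.
  move/lrun_nilE=> [_ e]; rewrite /fresh => u.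
  by rewrite (perm_uniq (perm_cat (peq_perm DLr (peq_sym e)) (perm_refl _))).
by case/lrun_consE=> C1 [h1 h2] u; apply: IH h2 (fresh_cons h1 u).
Qed.

Lemma fresh_catL C pre post : fresh C (pre ++ post) -> fresh C pre.
Proof. by rewrite /fresh map_cat flatten_cat catA cat_uniq => /andP[]. Qed.

Lemma fresh_uniq C ss : fresh C ss -> uniq C.2.
Proof. by rewrite /fresh cat_uniq => /andP[]. Qed.

Lemma lstep_mem C s C1 z : lstepR C s C1 -> uniq C.2 -> z \in C1.2 ->
  z \in sW s \/ (z \in C.2 /\ z != socc s).
Proof.
case=> _ _ [Xs [h1 h2]] u; rewrite (peq_mem DLr h2) mem_cat => /orP[->|zX]; first by left.
right; rewrite (peq_mem DLr h1) in_cons zX orbT; split=> //.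
rewrite (perm_uniq (peq_perm DLr h1)) /= in u.
by apply/eqP=> ez; move: u; rewrite -ez zX.
Qed.

Lemma lstep_memW C s C1 z : lstepR C s C1 -> z \in sW s -> z \in C1.2.
Proof. by case=> _ _ [Xs [h1 h2]]; rewrite (peq_mem DLr h2) mem_cat => ->. Qed.

Lemma lstep_memX C s C1 z : lstepR C s C1 -> z \in C.2 -> z != socc s -> z \in C1.2.
Proof.
case=> _ _ [Xs [h1 h2]]; rewrite (peq_mem DLr h2) (peq_mem DLr h1) mem_cat in_cons.
by move=> /orP[/eqP->|->]; rewrite ?eqxx ?orbT.
Qed.

Lemma lstep_occ C s C1 : lstepR C s C1 -> socc s \in C.2.
Proof. by case=> _ _ [Xs [h1 _]]; rewrite (peq_mem DLr h1) mem_head. Qed.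

Definition above (U : seq occ) (x y : occ) :=
  [&& x != y, DL x y & filter (pred2 x y) U == [:: x; y]].

Lemma above_peq U V x y : peqL U V -> above U x y = above V x y.
Proof. by rewrite /above => h; case d: (DL x y); rewrite ?andbF //= h. Qed.

Lemma above_antisym U x y : above U x y -> above U y x -> False.
Proof.
case/and3P=> nxy _ /eqP h1 /and3P[_ _ /eqP h2].
have e: filter (pred2 y x) U = filter (pred2 x y) U by apply: eq_filter => z /=; rewrite orbC.
by move: h2; rewrite e h1 => -[exy]; rewrite exy eqxx in nxy.
Qed.

Lemma filter_uniq1 (x y : occ) s : uniq s -> x \in s -> y \notin s ->
  filter (pred2 x y) s = [:: x].
Proof.
move=> u xs ys; rewrite -(filter_pred1_uniq u xs); apply: eq_in_filter => z zs /=.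
case: (eqVneq z y) => [ezy|nzy]; first by rewrite -ezy zs in ys.
by rewrite orbF.
Qed.

Lemma filter_nil2 (x y : occ) s : x \notin s -> y \notin s -> filter (pred2 x y) s = [::].
Proof.
move=> xs ys; apply: filter_nil => z zs /=; apply/negP=> /orP[]/eqP ez.
  by rewrite -ez zs in xs.
by rewrite -ez zs in ys.
Qed.

Lemma lstep_min C s C1 z : lstepR C s C1 -> uniq C.2 -> z \in C.2 -> z != socc s ->
  DL (socc s) z -> above C.2 (socc s) z.
Proof.
case=> _ _ [Xs [h1 _]] u zC nz d; rewrite (above_peq _ _ h1) /above eq_sym nz d /=.
rewrite (perm_uniq (peq_perm DLr h1)) /= in u; case/andP: u => nX uX.
rewrite (peq_mem DLr h1) in_cons (negbTE nz) /= in zC.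
have e: filter (pred2 (socc s) z) Xs = filter (pred2 z (socc s)) Xs.
  by apply: eq_filter => w /=; rewrite orbC.
by rewrite eqxx /= e filter_uniq1.
Qed.

Definition Dsub (x y : A) := forall c, D x c -> D y c.

Lemma lstep_P1 C s C1 z : lstepR C s C1 -> z \in sW s -> Dsub z.1 (socc s).1.
Proof.
case=> h1 h2 _ zW.
have h : (C.1, (socc s).1, map fst (sW s), C1.1) \in Delta by rewrite -h2.
move=> c dzc; case: Htp => P1 _; apply: (P1 _ _ _ _ h c); apply/hasP; exists z.1 => //; exact: map_f.
Qed.


Definition dstep (Dd : seq occ) (s : lstep) :=
  [seq z <- Dd | z != socc s] ++ (if socc s \in Dd then sW s else [::]).
Definition dd Dd (ss : seq lstep) := foldl dstep Dd ss.

Lemma dd_cat Dd s1 s2 : dd Dd (s1 ++ s2) = dd (dd Dd s1) s2.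
Proof. by rewrite /dd foldl_cat. Qed.
Lemma dd_rcons Dd ss s : dd Dd (rcons ss s) = dstep (dd Dd ss) s.
Proof. by rewrite -cats1 dd_cat. Qed.

Lemma dstep_mem Dd s z : (z \in dstep Dd s) =
  ((z \in Dd) && (z != socc s)) || ((socc s \in Dd) && (z \in sW s)).
Proof. by rewrite mem_cat mem_filter andbC; case: ifP => _; rewrite ?andbT ?andbF ?in_nil ?orbF. Qed.

Lemma dd_keep Dd ss : all (fun y => socc y \notin Dd) ss -> dd Dd ss = Dd.
Proof.
elim: ss Dd => //= s ss IH Dd /andP[h1 h2]; rewrite /dstep (negbTE h1) cats0.
have ->: [seq z <- Dd | z != socc s] = Dd.
  apply/all_filterP/allP => z zD; apply/eqP => e; by rewrite -e zD in h1.
exact: IH.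
Qed.

Lemma dd_stay Dd ss z : z \in Dd -> all (fun y => socc y != z) ss -> z \in dd Dd ss.
Proof.
elim: ss Dd => //= s ss IH Dd zD /andP[h1 h2]; apply: IH h2.
by rewrite dstep_mem zD eq_sym h1.
Qed.

Lemma dd_mono D1 D2 ss : {subset D1 <= D2} -> {subset dd D1 ss <= dd D2 ss}.
Proof.
elim: ss D1 D2 => //= s ss IH D1 D2 sub; apply: IH => z.
rewrite !dstep_mem => /orP[/andP[/sub -> ->]|/andP[/sub -> ->]] //; by rewrite orbT.
Qed.

Lemma dd_sub Dd ss : {subset dd Dd ss <= Dd ++ flatten (map sW ss)}.
Proof.
elim: ss Dd => [|s ss IH] Dd z /=; first by rewrite cats0.
move/IH; rewrite mem_cat dstep_mem !mem_cat.
by case/orP=> [/orP[/andP[->]|/andP[_ ->]]|->] //; rewrite ?orbT.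
Qed.

Definition Iv (U Dd : seq occ) := forall x y, x \in U -> above U x y -> y \in Dd -> x \in Dd.

Lemma Iv_peq U V Dd : peqL U V -> Iv U Dd -> Iv V Dd.
Proof.
move=> h iv x y; rewrite -(peq_mem DLr h) -(above_peq _ _ h); exact: iv.
Qed.

Lemma Iv_step C s C1 Dd : lstepR C s C1 -> uniq (C.2 ++ sW s) -> {subset Dd <= C.2} ->
  Iv C.2 Dd -> Iv C1.2 (dstep Dd s).
Proof.
move=> hs u sub iv x y xC1 ab yD.
have uC : uniq C.2 by move: u; rewrite cat_uniq => /and3P[].
have dis : forall z, z \in C.2 -> z \notin sW s.
  by move=> z zC; apply/negP=> zW; move: u; rewrite cat_uniq => /and3P[_ /hasP[]]; exists z.
have [_ _ [Xs [h1 h2]]] := hs.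
have uW : uniq (sW s ++ Xs).
  have := lstep_uniq hs (rest := [::]); rewrite !cats0 => /(_ u).
  by rewrite (perm_uniq (peq_perm DLr h2)).
rewrite dstep_mem in yD; rewrite dstep_mem.
have [xW|[xC xo]] := lstep_mem hs uC xC1.
  case oD: (socc s \in Dd); first by rewrite xW orbT.
  rewrite oD /= orbF in yD; case/andP: yD => yD yo.
  have yC := sub _ yD.
  case/and3P: ab => _ dxy _.
  have doy : DL (socc s) y by apply: (lstep_P1 hs xW).
  have := iv _ _ (lstep_occ hs) (lstep_min hs uC yC yo doy) yD.
  by rewrite oD.
rewrite (above_peq _ _ h2) in ab.
case/and3P: ab => nxy dxy /eqP ab.
have xnW := dis _ xC.
case/orP: yD => [/andP[yD yo]|/andP[_ yW]].
  have ynW := dis _ (sub _ yD).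
  rewrite filter_cat (filter_nil2 xnW ynW) /= in ab.
  have ab' : above C.2 x y.
    rewrite (above_peq _ _ h1) /above nxy dxy /=.
    have -> : (socc s == x) = false by rewrite eq_sym (negbTE xo).
    have -> : (socc s == y) = false by rewrite eq_sym (negbTE yo).
    by rewrite /= ab.
  by rewrite (iv _ _ xC ab' yD) xo.
have e: filter (pred2 x y) (sW s) = filter (pred2 y x) (sW s).
  by apply: eq_filter => w /=; rewrite orbC.
move: ab; rewrite filter_cat e filter_uniq1 //; last by move: uW; rewrite cat_uniq => /andP[].
by case=> exy; rewrite exy eqxx in nxy.
Qed.

Lemma Iv_init C s C1 : lstepR C s C1 -> uniq (C.2 ++ sW s) -> Iv C1.2 (sW s).
Proof.
move=> hs u.
have uC : uniq C.2 by move: u; rewrite cat_uniq => /and3P[].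
have := Iv_step hs u (Dd := [:: socc s]).
rewrite /dstep /= eqxx mem_seq1 eqxx; apply.
  by move=> z; rewrite mem_seq1 => /eqP->; apply: lstep_occ hs.
move=> x y xC ab; rewrite mem_seq1 => /eqP ey; subst y; exfalso.
case/and3P: (ab) => nxy dxy _.
apply: above_antisym ab (lstep_min hs uC xC nxy _).
by rewrite /DL Dsym.
Qed.

Lemma Iv_run C ss C' Dd : lrun C ss C' -> fresh C ss -> {subset Dd <= C.2} -> Iv C.2 Dd ->
  Iv C'.2 (dd Dd ss) /\ {subset dd Dd ss <= C'.2}.
Proof.
move=> h; elim: h Dd => [Ca Cb [_ e]|Ca Cb Cc s ss0 h1 h2 IH] Dd fr sub iv /=.
  by split; [apply: Iv_peq e iv|move=> z /sub; rewrite (peq_mem DLr e)].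
have u : uniq (Ca.2 ++ sW s) by move: fr; rewrite /fresh /= catA cat_uniq => /andP[].
have uC : uniq Ca.2 by move: u; rewrite cat_uniq => /and3P[].
apply: IH; first exact: fresh_cons h1 fr.
  move=> z; rewrite dstep_mem => /orP[/andP[zD zo]|/andP[_ zW]].
    exact: lstep_memX h1 (sub _ zD) zo.
  exact: lstep_memW h1 zW.
exact: Iv_step h1 u sub iv.
Qed.

Lemma dd_letters C ss C' Dd a : lrun C ss C' -> (forall z, z \in Dd -> Dsub z.1 a) ->
  forall z, z \in dd Dd ss -> Dsub z.1 a.
Proof.
move=> h; elim: h Dd => [Ca Cb _|Ca Cb Cc s ss0 h1 h2 IH] Dd hD //=.
apply: IH => z; rewrite dstep_mem => /orP[/andP[/hD //]|/andP[/hD oD zW]].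
by move=> c /(lstep_P1 h1 zW) /oD.
Qed.


Lemma P1r p a w q c y : (p, a, w, q) \in Delta -> y \in w -> D y c -> D a c.
Proof.
move=> h yw dyc; case: Htp => P1 _; apply: (P1 _ _ _ _ h c); apply/hasP; by exists y.
Qed.

Lemma lswap C s1 s2 ss C' : lrun C (s1 :: s2 :: ss) C' ->
  socc s2 \notin sW s1 -> ~~ DL (socc s1) (socc s2) ->
  exists s1' s2', [/\ lrun C (s2' :: s1' :: ss) C', key s1' = key s1 & key s2' = key s2].
Proof.
case/lrun_consE=> C1 [[r1D r1e [X1 [h1 h2]]] /lrun_consE [C2 [[r2D r2e [Y [h3 h4]]] h5]]] nbV ngb.
have [Y1 [Y2 [eX1 _ hall hY]]] := peq_extract DLr DLs (peq_trans (peq_sym h2) h3) nbV.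
rewrite all_cat in hall; case/andP: hall => hVb hY1.
rewrite r1e in r1D; rewrite r2e in r2D.
have gW : all (fun z => ~~ DL (socc s1) z) (sW s2).
  apply/allP=> z zW; apply/negP=> d; move/negP: ngb; apply.
  rewrite /DL Dsym; apply: (@P1r _ _ _ _ (socc s1).1 z.1 r2D); first exact: map_f.
  by rewrite Dsym.
have VW : all (fun x => all (fun y => ~~ DL x y) (sW s2)) (sW s1).
  apply/allP=> x xV; apply/allP=> y yW; apply/negP=> d.
  have := allP hVb x xV; rewrite /DL => /negP; apply.
  apply: (@P1r _ _ _ _ x.1 y.1 r2D); first exact: map_f.
  by rewrite Dsym.
have hpar : par D ((socc s1).1 :: map fst (sW s1)) ((socc s2).1 :: map fst (sW s2)).
  apply/allP=> x; rewrite in_cons => /orP[/eqP->|/mapP[z zV ->]];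
    apply/allP=> y; rewrite in_cons => /orP[/eqP->|/mapP[t tW ->]] //.
  - exact: (allP gW t tW).
  - by have := allP hVb z zV; rewrite /DL Dsym.
  - exact: (allP (allP VW z zV) t tW).
case: Htp => _ P2; have [q' [n1 n2]] := P2 _ _ _ _ _ _ _ r1D r2D hpar.
exists ((q', (socc s1).1, map fst (sW s1), C2.1), socc s1, sW s1).
exists ((C.1, (socc s2).1, map fst (sW s2), q'), socc s2, sW s2); split=> //.
apply: (@lrun_cons _ (q', sW s2 ++ socc s1 :: Y1 ++ Y2)).
  split=> //; exists (socc s1 :: Y1 ++ Y2); split; last exact: peq_refl.
  apply: peq_trans h1 _; rewrite eX1.
  have -> : socc ((C.1, (socc s2).1, map fst (sW s2), q'), socc s2, sW s2) = socc s2 by [].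
  apply: peq_trans (peq_cons _ (peq_bubble DLr DLs _ hY1)) _.
  exact: (peq_swap DLr DLs _ ngb).
apply: lrun_cons h5; split=> //; exists (sW s2 ++ Y1 ++ Y2); split.
  exact: (peq_bubble DLr DLs _ gW).
apply: peq_trans h4 _; apply: peq_trans (peq_cat (peq_refl _) hY) _.
change (peqL (sW s2 ++ sW s1 ++ Y1 ++ Y2) (sW s1 ++ sW s2 ++ Y1 ++ Y2)).
rewrite !catA; apply: peq_cat; last exact: peq_refl.
apply: peq_cat; last exact: peq_refl.
apply: peq_sym; exact: (peq_catC DLr DLs VW).
Qed.

Lemma lmove C mid f post C' : lrun C (mid ++ f :: post) C' ->
  (forall x, x \in mid -> socc f \notin sW x /\ ~~ DL (socc x) (socc f)) ->
  exists f' mid', [/\ lrun C (f' :: mid' ++ post) C', key f' = key f & map key mid' = map key mid].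
Proof.
elim: mid C => [|x mid IH] C /= h hx; first by exists f, [::].
case/lrun_consE: h => C1 [h1 h2].
have [f1 [mid1 [h3 e1 e2]]] : exists f' mid', [/\ lrun C1 (f' :: mid' ++ post) C', key f' = key f & map key mid' = map key mid].
  apply: (IH C1 h2) => y yin; apply: hx; by rewrite in_cons yin orbT.
have ef : socc f1 = socc f by move: e1; rewrite /key => -[].
have [hx1 hx2] := hx x (mem_head _ _).
have hs1 : socc f1 \notin sW x by rewrite ef.
have hs2 : ~~ DL (socc x) (socc f1) by rewrite ef.
have [x' [f' [h4 ex e']]] := lswap (lrun_cons h1 h3) hs1 hs2.
by exists f', (x' :: mid1); split=> //=; rewrite ?e' ?e1 ?ex ?e2.
Qed.

Lemma lmerge C s f ss C' : lrun C (s :: f :: ss) C' -> sW f = [::] -> socc f \in sW s ->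
  exists s' W1 W2, [/\ lrun C (s' :: ss) C', socc s' = socc s, sW s = W1 ++ socc f :: W2
                     & sW s' = W1 ++ W2].
Proof.
case/lrun_consE=> C1 [[r1D r1e [X1 [h1 h2]]] /lrun_consE [C2 [[r2D r2e [Y [h3 h4]]] h5]]] fW fin.
have [W1 [W2 [eW nb1]]] := split_first fin.
have e1 : peqL C1.2 (W1 ++ socc f :: (W2 ++ X1)) by move: h2; rewrite eW -catA.
have [Z1 [Z2 [_ _ hall _]]] := peq_extract DLr DLs (peq_trans (peq_sym e1) h3) nb1.
rewrite all_cat in hall; case/andP: hall => hb1 _.
have eY : peqL Y (W1 ++ W2 ++ X1).
  apply: peq_sym; apply: (@peq_consK _ _ (socc f)).
  apply: peq_trans (peq_sym (peq_bubble DLr DLs _ hb1)) _.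
  exact: peq_trans (peq_sym e1) h3.
rewrite r1e eW map_cat /= in r1D; rewrite r2e fW /= in r2D.
have hpar : par D (map fst W1) [:: (socc f).1].
  apply/allP=> x /mapP[z z1 ->] /=; rewrite andbT.
  by have := allP hb1 z z1; rewrite /DL Dsym.
have := Hsat r1D r2D hpar; rewrite -map_cat => hD.
exists ((C.1, (socc s).1, map fst (W1 ++ W2), C2.1), socc s, W1 ++ W2), W1, W2; split=> //.
apply: lrun_cons h5; split=> //; exists X1; split=> //.
by apply: peq_trans h4 _; rewrite fW /= -catA.
Qed.

Definition ustep (r : rule A Q) (c e : conf A Q) :=
  [/\ r \in Delta, r.1.1.1 = c.1, r.2 = e.1 &
      exists x, peqA c.2 (r.1.1.2 :: x) /\ peqA e.2 (r.1.2 ++ x)].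

Inductive urun : conf A Q -> seq (rule A Q) -> conf A Q -> Prop :=
| urun_nil c d : c.1 = d.1 -> peqA c.2 d.2 -> urun c [::] d
| urun_cons c e d r rs : ustep r c e -> urun e rs d -> urun c (r :: rs) d.

Lemma urun_start c0 c rs d : c0.1 = c.1 -> peqA c0.2 c.2 -> urun c rs d -> urun c0 rs d.
Proof.
move=> e1 e2 h; case: h e1 e2 => [c1 d1 f1 f2|c1 e d1 r rs' [h1 h2 h3 [x [h4 h5]]] h6] e1 e2.
  by apply: urun_nil; [rewrite e1|apply: peq_trans f2].
by apply: urun_cons h6; split=> //; [rewrite e1|exists x; split=> //; apply: peq_trans h4].
Qed.

Lemma urun_end c rs d d' : d.1 = d'.1 -> peqA d.2 d'.2 -> urun c rs d -> urun c rs d'.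
Proof.
move=> e1 e2 h; elim: h e1 e2 => [c1 d1 f1 f2|c1 e d1 r rs' h1 h2 IH] e1 e2.
  by apply: urun_nil; [rewrite f1|apply: peq_trans e2].
by apply: urun_cons h1 (IH e1 e2).
Qed.

Lemma urun_cat c rs1 e rs2 d : urun c rs1 e -> urun e rs2 d -> urun c (rs1 ++ rs2) d.
Proof.
elim=> [c1 d1 f1 f2|c1 e1 d1 r rs h1 h2 IH] h /=.
  by apply: urun_start h; [|apply: f2].
exact: urun_cons h1 (IH h).
Qed.

Definition unl (C : lconf) : conf A Q := (C.1, map fst C.2).

Lemma trg_map U V : trg DL U V -> trg D (map fst U) (map fst V).
Proof.
elim=> {U V} [a b n|u|u v _ h|u v w _ h1 _ h2|u u' v v' _ h1 _ h2].
- exact: trg_swap.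
- exact: trg_refl.
- exact: trg_sym.
- exact: trg_trans h1 h2.
- by rewrite !map_cat; apply: trg_cat.
Qed.

Lemma peqL_map U V : peqL U V -> peqA (map fst U) (map fst V).
Proof.
by move=> h; apply: trg_peq Drefl Dsym _ _ (trg_map (peq_trg DLr DLs h)).
Qed.

Lemma lstep_ustep C s C1 : lstepR C s C1 -> ustep (srule s) (unl C) (unl C1).
Proof.
case=> h1 h2 [Xs [h3 h4]]; rewrite h2 in h1 *; split=> //.
exists (map fst Xs); split; first exact: (peqL_map h3).
by rewrite /= -map_cat; apply: peqL_map.
Qed.

Lemma lrun_urun C ss C' : lrun C ss C' -> urun (unl C) (map srule ss) (unl C').
Proof.
elim=> [C1 C2 [e1 e2]|C1 C2 C3 s ss' h1 _ IH] /=.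
  by apply: urun_nil => //; apply: peqL_map.
exact: urun_cons (lstep_ustep h1) IH.
Qed.

Definition cls (rs : seq (rule A Q)) := [seq twins D r.1.1.2 | r <- rs & r.1.2 != [::]].
Definition lcls (ks : seq (occ * seq occ)) := [seq twins D k.1.1 | k <- ks & k.2 != [::]].

Lemma lrun_cls C ss C' : lrun C ss C' -> cls (map srule ss) = lcls (map key ss).
Proof.
elim=> [//|C1 C2 C3 s ss' [_ e _] _ IH] /=.
move: IH; rewrite /cls /lcls /= e /= => IH.
by case: (sW s) => [|w W] /=; rewrite IH.
Qed.

Lemma lcls_perm ks ks' : perm_eq ks ks' -> lcls ks =i lcls ks'.
Proof. by move=> p; apply: perm_mem; apply: perm_map; apply: perm_filter. Qed.

Lemma lcls_cons k ks : lcls (k :: ks) = (if k.2 != [::] then [:: twins D k.1.1] else [::]) ++ lcls ks.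
Proof. by rewrite /lcls /=; case: ifP. Qed.

Lemma lcls_cat ks1 ks2 : lcls (ks1 ++ ks2) = lcls ks1 ++ lcls ks2.
Proof. by rewrite /lcls filter_cat map_cat. Qed.

Definition minimal (S : seq {set A}) C ss C' :=
  [/\ lrun C ss C', {subset lcls (map key ss) <= S} &
      forall rs, urun (unl C) rs (unl C') -> {subset cls rs <= S} -> size ss <= size rs].

Lemma minimal_perm S C ss ss' C' : minimal S C ss C' -> lrun C ss' C' ->
  perm_eq (map key ss) (map key ss') -> minimal S C ss' C'.
Proof.
case=> _ h2 h3 h p; split=> //.
  by move=> z; rewrite -(lcls_perm p); apply: h2.
by move=> rs hr hc; rewrite -(size_map key ss') -(perm_size p) size_map; apply: h3.
Qed.

Lemma fresh_perm C ss ss' : fresh C ss -> perm_eq (map key ss) (map key ss') -> fresh C ss'.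
Proof.
rewrite /fresh => u p.
have e : forall l, map sW l = map snd (map key l) by move=> l; rewrite -map_comp.
rewrite e -(perm_uniq (perm_cat (perm_refl _) (perm_flatten (perm_map snd p)))).
by rewrite -e.
Qed.

Lemma minimal_suffix S C pre post C' Cm : minimal S C (pre ++ post) C' -> lrun C pre Cm ->
  minimal S Cm post C'.
Proof.
case=> h1 h2 h3 hp.
have [Cm' [hp' hs]] := (lrun_cat C pre post C').1 h1.
split.
- by apply: lrun_start hs; apply: lrun_det hp hp'.
- by move=> z zl; apply: h2; rewrite map_cat lcls_cat mem_cat zl orbT.
move=> rs hr hc.
have := h3 (map srule pre ++ rs) (urun_cat (lrun_urun hp) hr).
rewrite !size_cat size_map leq_add2l; apply.
move=> z; rewrite /cls filter_cat map_cat mem_cat -/(cls _) -/(cls _) (lrun_cls hp).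
by case/orP=> [zl|/hc //]; apply: h2; rewrite map_cat lcls_cat mem_cat zl.
Qed.

Lemma fresh_disj C s ss x z : fresh C (s :: ss) -> x \in ss -> z \in sW s -> z \notin sW x.
Proof.
rewrite /fresh /= => u xs zW; apply/negP=> zx.
move: u; rewrite cat_uniq => /and3P[_ _]; rewrite cat_uniq => /and3P[_ /hasP[]].
by exists z => //; apply/flatten_mapP; exists x.
Qed.

Lemma first_split (T : Type) (p : pred T) l : has p l ->
  exists l1 x l2, [/\ l = l1 ++ x :: l2, ~~ has p l1 & p x].
Proof.
elim: l => [|y l IH] //= /orP[py|/IH [l1 [x [l2 [-> h1 h2]]]]].
  by exists [::], y, l.
case py: (p y); first by exists [::], y, (l1 ++ x :: l2).
by exists (y :: l1), x, l2; rewrite /= py.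
Qed.

Lemma first_ne S C s mid f post C' : minimal S C (s :: mid ++ f :: post) C' ->
  fresh C (s :: mid ++ f :: post) -> all (fun y => socc y \notin sW s) mid ->
  socc f \in sW s -> sW f != [::].
Proof.
move=> M fr hmid fin; apply/negP=> /eqP fW.
case: (M) => hrun hcls hmin.
case/lrun_consE: hrun => C1 [hs hrest].
have u : uniq (C.2 ++ sW s) by move: fr; rewrite /fresh /= catA cat_uniq => /andP[].
have fr1 := fresh_cons hs fr.
have cond : forall x, x \in mid -> socc f \notin sW x /\ ~~ DL (socc x) (socc f).
  move=> x xm; split.
    by apply: fresh_disj fr _ fin; rewrite mem_cat xm.
  have [m1 [m2 [em _]]] := split_first xm.
  move: hrest fr1; rewrite em -catA /= => hrest fr1.
  have [Cx [h1 h2]] := (lrun_cat _ _ _ _).1 hrest.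
  case/lrun_consE: h2 => Cx1 [hx _].
  have [iv sub] := Iv_run h1 (fresh_catL fr1) (fun z => lstep_memW hs) (Iv_init hs u).
  have ek : dd (sW s) m1 = sW s.
    by apply: dd_keep; apply/allP=> y ym; apply: (allP hmid); rewrite em mem_cat ym.
  rewrite ek in iv sub.
  have uCx : uniq Cx.2 by apply: fresh_uniq (fresh_catR h1 fr1).
  apply/negP=> d.
  have xnW : socc x \notin sW s by apply: (allP hmid); rewrite em mem_cat mem_head orbT.
  have nb : socc f != socc x by apply/eqP=> e; rewrite -e fin in xnW.
  have := iv _ _ (lstep_occ hx) (lstep_min hx uCx (sub _ fin) nb d) fin.
  by rewrite (negbTE xnW).
have [f' [mid' [h1 ef em]]] := lmove hrest cond.
have ef1 : socc f' = socc f by move: ef; rewrite /key => -[].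
have ef2 : sW f' = sW f by move: ef; rewrite /key => -[].
have fW' : sW f' = [::] by rewrite ef2.
have fin' : socc f' \in sW s by rewrite ef1.
have [s' [W1 [W2 [h2 es eW eW']]]] := lmerge (lrun_cons hs h1) fW' fin'.
have sm : size mid' = size mid by rewrite -(size_map key mid') em size_map.
have hsub : {subset cls (map srule (s' :: mid' ++ post)) <= S}.
  move=> z; rewrite (lrun_cls h2) /= map_cat em lcls_cons lcls_cat mem_cat => /orP[zh|zl];
    apply: hcls; rewrite /= lcls_cons map_cat lcls_cat !mem_cat.
    apply/orP; left; move: zh; rewrite /key /= es eW' eW.
    by case: ifP => // _; case: (W1).
  move: zl; rewrite mem_cat => /orP[zm|zp]; first by rewrite zm orbT.
  by rewrite lcls_cons mem_cat zp !orbT.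
have := hmin _ (lrun_urun h2) hsub.
by rewrite size_map /= !size_cat /= sm addnS ltnn.
Qed.

Lemma ne_sub (l1 l2 : seq occ) : {subset l1 <= l2} -> l1 != [::] -> l2 != [::].
Proof. by case: l1 => [|z l1] // sub _; move: (sub z (mem_head _ _)); case: (l2). Qed.

Lemma notin_all (p : pred lstep) l : ~~ has p l -> all (fun y => ~~ p y) l.
Proof. by move=> h; apply/allP=> y yl; apply/negP=> py; move/hasP: h; apply; exists y. Qed.

Lemma productive_n n : forall S C s ss C', size ss <= n -> minimal S C (s :: ss) C' ->
  fresh C (s :: ss) -> sW s != [::] -> forall pre post, ss = pre ++ post -> dd (sW s) pre != [::].
Proof.
elim: n => [|n IH] S C s ss C' hn M fr ne pre post e;
  (case hp: (has (fun y => socc y \in sW s) pre); last by rewrite dd_keep // notin_all ?hp).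
  by move: hn hp; rewrite e size_cat; clear e; case: pre.
have [m1 [f [m2 [ep hm1 hf]]]] := first_split hp.
have e2 : s :: ss = (s :: m1) ++ f :: (m2 ++ post) by rewrite e ep -catA.
have e3 : s :: ss = s :: m1 ++ f :: m2 ++ post by rewrite e2.
have hf' : sW f != [::].
  apply: (first_ne (S := S) (C := C) (C' := C') (s := s) (mid := m1) (post := m2 ++ post)) => //.
  - by rewrite -e3.
  - by rewrite -e3.
  - exact: notin_all.
case: (M) => hrun _ _.
rewrite e2 in hrun; have [Cf [h1 h2]] := (lrun_cat _ _ _ _).1 hrun.
have Mf : minimal S Cf (f :: m2 ++ post) C' by apply: minimal_suffix h1; rewrite -e2.
have frf : fresh Cf (f :: m2 ++ post) by apply: fresh_catR h1 _; rewrite -e2.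
have hsz : size (m2 ++ post) <= n.
  by move: hn; rewrite e ep -catA !size_cat /= addnS ltnS; apply: leq_trans; rewrite leq_addl.
have := IH S Cf f (m2 ++ post) C' hsz Mf frf hf' m2 post erefl.
rewrite ep dd_cat (@dd_keep (sW s) m1) ?notin_all //= => h.
apply: ne_sub h; apply: dd_mono => z zf.
by rewrite dstep_mem hf zf orbT.
Qed.

Lemma productive S C s ss C' : minimal S C (s :: ss) C' -> fresh C (s :: ss) ->
  sW s != [::] -> forall pre post, ss = pre ++ post -> dd (sW s) pre != [::].
Proof. exact: (@productive_n (size ss)). Qed.

Lemma lemK S C s pre t post C' : minimal S C (s :: pre ++ t :: post) C' ->
  fresh C (s :: pre ++ t :: post) -> sW s != [::] -> Dsub (socc s).1 (socc t).1 ->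
  socc t \in dd (sW s) pre.
Proof.
move=> M fr ne hD.
have := productive M fr ne erefl; case E: (dd (sW s) pre) => [|e l] // _.
case: (M) => hrun _ _.
case/lrun_consE: hrun => C1 [hs hrest].
have [Ct [h1 h2]] := (lrun_cat _ _ _ _).1 hrest.
case/lrun_consE: h2 => Ct1 [ht _].
have u : uniq (C.2 ++ sW s) by move: fr; rewrite /fresh /= catA cat_uniq => /andP[].
have fr1 := fresh_cons hs fr.
have [iv sub] := Iv_run h1 (fresh_catL fr1) (fun z => lstep_memW hs) (Iv_init hs u).
have let' := dd_letters h1 (fun z => lstep_P1 hs) (z := e).
rewrite E in iv sub let'.
have eC : e \in Ct.2 by apply: sub; rewrite mem_head.
have uCt : uniq Ct.2 by apply: fresh_uniq (fresh_catR h1 fr1).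
apply/negPn/negP=> nb.
have ne' : e != socc t by apply/eqP=> ee; rewrite -ee mem_head in nb.
have d : DL (socc t) e by apply: hD; apply: (let' (mem_head _ _)); apply: Drefl.
by rewrite (iv _ _ (lstep_occ ht) (lstep_min ht uCt eC ne' d) (mem_head _ _)) in nb.
Qed.

Lemma origin Dd pre b : b \in dd Dd pre ->
  (b \in Dd /\ all (fun y => socc y != b) pre) \/
  exists p1 x p2, [/\ pre = p1 ++ x :: p2, socc x \in dd Dd p1, b \in sW x
                   & all (fun y => socc y != b) p2].
Proof.
elim/last_ind: pre => [|p x IH] /=; first by left.
rewrite dd_rcons dstep_mem => /orP[/andP[/IH [[h1 h2]|[p1 [y [p2 [-> h1 h2 h3]]]]] nb]|/andP[h1 h2]].
- by left; split=> //; rewrite all_rcons eq_sym nb h2.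
- by right; exists p1, y, (rcons p2 x); split=> //; [rewrite rcons_cat|rewrite all_rcons eq_sym nb h3].
- by right; exists p, x, [::]; split=> //; rewrite cats1.
Qed.

Lemma lemE S C r mid t post C' : minimal S C (r :: mid ++ t :: post) C' ->
  fresh C (r :: mid ++ t :: post) -> socc t \in sW r -> Dsub (socc r).1 (socc t).1 ->
  all (fun y => socc y \notin sW r) mid.
Proof.
move=> M fr bin hD.
case hp: (has (fun y => socc y \in sW r) mid); last by apply: notin_all; rewrite hp.
have [m1 [f [m2 [em hm1 hf]]]] := first_split hp.
have e3 : r :: mid ++ t :: post = r :: m1 ++ f :: (m2 ++ t :: post) by rewrite em -catA.
have e2 : r :: mid ++ t :: post = (r :: m1) ++ f :: (m2 ++ t :: post) by rewrite e3.
have hf' : sW f != [::].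
  apply: (first_ne (S := S) (C := C) (C' := C') (s := r) (mid := m1) (post := m2 ++ t :: post)) => //.
  - by rewrite -e3.
  - by rewrite -e3.
  - exact: notin_all.
case: (M) => hrun _ _.
have hr0 := hrun; case/lrun_consE: hr0 => C1 [hsr _].
rewrite e2 in hrun; have [Cf [h1 h2]] := (lrun_cat _ _ _ _).1 hrun.
have Mf : minimal S Cf (f :: m2 ++ t :: post) C' by apply: minimal_suffix h1; rewrite -e2.
have frf : fresh Cf (f :: m2 ++ t :: post) by apply: fresh_catR h1 _; rewrite -e2.
have := productive Mf frf hf' erefl; case E: (dd (sW f) m2) => [|e l] // _.
case/lrun_consE: h2 => Cf1 [hsf hrest].
have [Ct [h3 h4]] := (lrun_cat _ _ _ _).1 hrest.
case/lrun_consE: h4 => Ct1 [ht _].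
have u : uniq (Cf.2 ++ sW f) by move: frf; rewrite /fresh /= catA cat_uniq => /andP[].
have frf1 := fresh_cons hsf frf.
have [iv sub] := Iv_run h3 (fresh_catL frf1) (fun z => lstep_memW hsf) (Iv_init hsf u).
have let' := dd_letters h3 (fun z => lstep_P1 hsf) (z := e).
rewrite E in iv sub let'.
have eC : e \in Ct.2 by apply: sub; rewrite mem_head.
have uCt : uniq Ct.2 by apply: fresh_uniq (fresh_catR h3 frf1).
have nbd : socc t \notin dd (sW f) m2.
  apply/negP=> /dd_sub; rewrite mem_cat => /orP[bf|/flatten_mapP [y ym yb]].
    have fs : f \in mid ++ t :: post by rewrite em -catA mem_cat mem_head orbT.
    by move: (fresh_disj fr fs bin); rewrite bf.
  have ys : y \in mid ++ t :: post by rewrite em -catA mem_cat in_cons mem_cat ym !orbT.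
  by move: (fresh_disj fr ys bin); rewrite yb.
rewrite E in nbd.
have ne' : e != socc t by apply/eqP=> ee; rewrite -ee mem_head in nbd.
have d : DL (socc t) e.
  apply: hD; apply: (lstep_P1 hsr hf); apply: (let' (mem_head _ _)); apply: Drefl.
by rewrite (iv _ _ (lstep_occ ht) (lstep_min ht uCt eC ne' d) (mem_head _ _)) in nbd.
Qed.

Lemma twinsP a b : reflect (forall c, D b c = D a c) (b \in twins D a).
Proof. by rewrite inE; apply: (iffP forallP) => h c; [apply/eqP|apply/eqP]. Qed.

Lemma indep S C E1 s1 mid x t post C' :
  minimal S C (E1 ++ s1 :: mid ++ x :: t :: post) C' ->
  fresh C (E1 ++ s1 :: mid ++ x :: t :: post) ->
  sW s1 != [::] -> (socc t).1 \in twins D (socc s1).1 ->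
  ~~ ((sW x != [::]) && ((socc x).1 \in twins D (socc s1).1)) ->
  socc t \notin sW x /\ ~~ DL (socc x) (socc t).
Proof.
move=> M fr ne /twinsP hb hx.
case: (M) => hrun _ _.
have [C1 [hE hrest]] := (lrun_cat _ _ _ _).1 hrun.
have M1 := minimal_suffix M hE; have fr1 := fresh_catR hE fr.
have eK : s1 :: mid ++ x :: t :: post = s1 :: (mid ++ [:: x]) ++ t :: post by rewrite -catA.
have hK : socc t \in dd (sW s1) (mid ++ [:: x]).
  apply: (lemK (S := S) (C := C1) (C' := C') (s := s1) (pre := mid ++ [:: x]) (t := t) (post := post)); rewrite -?eK //.
  by move=> c; rewrite hb.
rewrite dd_cat /= dstep_mem in hK.
case/lrun_consE: hrest => C2 [hs1 hr2].
have [Cx [hm hx2]] := (lrun_cat _ _ _ _).1 hr2.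
case/lrun_consE: hx2 => Ct [hxs _].
have u1 : uniq (C1.2 ++ sW s1) by move: fr1; rewrite /fresh /= catA cat_uniq => /andP[].
have fr2 := fresh_cons hs1 fr1.
have [iv sub] := Iv_run hm (fresh_catL fr2) (fun z => lstep_memW hs1) (Iv_init hs1 u1).
have let' := dd_letters hm (fun z => lstep_P1 hs1).
have frx := fresh_catR hm fr2.
have bnx : socc t \notin sW x.
  apply/negP=> bx; move: hK; rewrite bx andbT.
  case/orP=> [/andP[bD _]|gD].
    move: frx; rewrite /fresh /= cat_uniq => /and3P[_ /hasP [] ]; exists (socc t).
      by rewrite mem_cat bx.
    exact: sub.
  move/negP: hx; apply; apply/andP; split; first by apply/eqP=> e; rewrite e in bx.
  apply/twinsP=> c; apply/idP/idP; first exact: let'.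
  by rewrite -hb; apply: (lstep_P1 hxs bx).
split=> //; apply/negP=> d.
move: hK; rewrite (negbTE bnx) andbF orbF => /andP[bD nbg].
have [pre' [r [mid2 [e1 br hm2 hr]]]] : exists pre' r mid2,
    [/\ E1 ++ s1 :: mid = pre' ++ r :: mid2, socc t \in sW r,
        all (fun y => socc y != socc t) mid2 & Dsub (socc r).1 (socc s1).1].
  case: (origin bD) => [[h1 h2]|[p1 [r [p2 [ep h1 h2 h3]]]]].
    by exists E1, s1, mid; split.
  exists (E1 ++ s1 :: p1), r, p2; split=> //; first by rewrite ep -catA.
  have [Cp [hp _]] := (lrun_cat _ _ _ _).1 (eq_ind _ (fun l => lrun C2 l Cx) hm _ ep).
  exact: (dd_letters hp (fun z => lstep_P1 hs1) h1).
have ew : E1 ++ s1 :: mid ++ x :: t :: post = pre' ++ r :: mid2 ++ x :: t :: post.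
  by rewrite -cat_cons catA e1 -catA.
rewrite ew in M fr hrun.
have [Cr [hpr hrr]] := (lrun_cat _ _ _ _).1 hrun.
have Mr := minimal_suffix M hpr; have frr := fresh_catR hpr fr.
have eE : r :: mid2 ++ x :: t :: post = r :: (mid2 ++ [:: x]) ++ t :: post by rewrite -catA.
have hEE : all (fun y => socc y \notin sW r) (mid2 ++ [:: x]).
  apply: (lemE (S := S) (C := Cr) (C' := C') (r := r) (mid := mid2 ++ [:: x]) (t := t) (post := post)); rewrite -?eE //.
  by move=> c /hr; rewrite hb.
rewrite all_cat /= andbT in hEE; case/andP: hEE => hE1 hE2.
case/lrun_consE: hrr => Cr1 [hsr hr1].
have [Cx' [hm' hx2']] := (lrun_cat _ _ _ _).1 hr1.
case/lrun_consE: hx2' => Ct' [hxs' _].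
have ur : uniq (Cr.2 ++ sW r) by move: frr; rewrite /fresh /= catA cat_uniq => /andP[].
have frr1 := fresh_cons hsr frr.
have [iv' sub'] := Iv_run hm' (fresh_catL frr1) (fun z => lstep_memW hsr) (Iv_init hsr ur).
rewrite dd_keep // in iv' sub'.
have uCx : uniq Cx'.2 by apply: fresh_uniq (fresh_catR hm' frr1).
have := iv' _ _ (lstep_occ hxs') (lstep_min hxs' uCx (sub' _ br) nbg d) br.
by rewrite (negbTE hE2).
Qed.

Definition isTk (T : {set A}) (k : occ * seq occ) := (k.2 != [::]) && (k.1.1 \in T).
Definition isT (T : {set A}) (s : lstep) := isTk T (key s).

Lemma moveT S C E1 s1 P X t Y C' :
  minimal S C (E1 ++ s1 :: P ++ X ++ t :: Y) C' -> fresh C (E1 ++ s1 :: P ++ X ++ t :: Y) ->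
  sW s1 != [::] -> ~~ has (isT (twins D (socc s1).1)) X -> isT (twins D (socc s1).1) t ->
  exists t' X', [/\ minimal S C (E1 ++ s1 :: P ++ t' :: X' ++ Y) C',
                 fresh C (E1 ++ s1 :: P ++ t' :: X' ++ Y),
                 key t' = key t & map key X' = map key X].
Proof.
elim/last_ind: X t Y => [|X x IH] t Y M fr ne hX ht; first by exists t, [::].
have e : E1 ++ s1 :: P ++ rcons X x ++ t :: Y = E1 ++ s1 :: (P ++ X) ++ x :: t :: Y.
  by rewrite -cats1 -!catA.
rewrite e in M fr.
move: hX; rewrite -cats1 has_cat /= orbF negb_or => /andP[hX hx].
have [i1 i2] := indep M fr ne (proj2 (andP ht)) hx.
case: (M) => hrun _ _.
have e2 : E1 ++ s1 :: (P ++ X) ++ x :: t :: Y = (E1 ++ s1 :: P ++ X) ++ x :: t :: Y.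
  by rewrite -cat_cons catA.
rewrite e2 in hrun M fr.
have [Cm [h1 h2]] := (lrun_cat _ _ _ _).1 hrun.
have [x' [t' [h3 ex et]]] := lswap h2 i1 i2.
have h4 : lrun C ((E1 ++ s1 :: P ++ X) ++ t' :: x' :: Y) C'.
  by apply/lrun_cat; exists Cm.
have p : perm_eq (map key ((E1 ++ s1 :: P ++ X) ++ x :: t :: Y))
                 (map key ((E1 ++ s1 :: P ++ X) ++ t' :: x' :: Y)).
  rewrite !map_cat perm_cat2l /= ex et.
  by apply/permPl; apply: (perm_catCA [:: key x] [:: key t] (map key Y)).
have M' := minimal_perm M h4 p; have fr' := fresh_perm fr p.
have e3 : (E1 ++ s1 :: P ++ X) ++ t' :: x' :: Y = E1 ++ s1 :: P ++ X ++ t' :: (x' :: Y).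
  by rewrite -cat_cons -!catA.
rewrite e3 in M' fr'.
have ht' : isT (twins D (socc s1).1) t' by rewrite /isT et.
have [t'' [X'' [M'' fr'' et' eX]]] := IH t' (x' :: Y) M' fr' ne hX ht'.
exists t'', (rcons X'' x'); split.
- by rewrite -cats1 -catA.
- by rewrite -cats1 -catA.
- by rewrite et' et.
- by rewrite -!cats1 !map_cat eX /= ex.
Qed.

Lemma sortT n : forall S C E1 s1 P R C', count (isT (twins D (socc s1).1)) R <= n ->
  minimal S C (E1 ++ s1 :: P ++ R) C' -> fresh C (E1 ++ s1 :: P ++ R) -> sW s1 != [::] ->
  all (isT (twins D (socc s1).1)) P ->
  exists P' R', [/\ minimal S C (E1 ++ s1 :: P' ++ R') C', fresh C (E1 ++ s1 :: P' ++ R'),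
     all (isT (twins D (socc s1).1)) P', ~~ has (isT (twins D (socc s1).1)) R'
     & perm_eq (map key (P ++ R)) (map key (P' ++ R'))].
Proof.
elim: n => [|n IH] S C E1 s1 P R C' hn M fr ne hP;
  (case hR: (has (isT (twins D (socc s1).1)) R); last by exists P, R; rewrite hR).
  by move: hn; rewrite leqNgt -has_count hR.
have [X [t [Y [eR hX ht]]]] := first_split hR.
rewrite eR in M fr.
have [t' [X' [M' fr' et eX]]] := moveT M fr ne hX ht.
have e : E1 ++ s1 :: P ++ t' :: X' ++ Y = E1 ++ s1 :: (rcons P t') ++ (X' ++ Y).
  by rewrite -cats1 -catA.
rewrite e in M' fr'.
have hP' : all (isT (twins D (socc s1).1)) (rcons P t') by rewrite all_rcons hP andbT /isT et.
have hc : count (isT (twins D (socc s1).1)) (X' ++ Y) <= n.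
  move: hn; rewrite eR !count_cat /= ht.
  have -> : count (isT (twins D (socc s1).1)) X' = count (isT (twins D (socc s1).1)) X.
    by rewrite /isT -!(count_map key (isTk _)) eX.
  have c0 : count (isT (twins D (socc s1).1)) X = 0.
    by apply/eqP; rewrite -leqn0 leqNgt -has_count (negbTE hX).
  by rewrite c0 !add0n add1n ltnS.
have [P'' [R'' [M'' fr'' hP'' hR'' p]]] := IH _ _ _ _ _ _ _ hc M' fr' ne hP'.
exists P'', R''; split=> //.
apply: perm_trans p; rewrite eR -cats1 -catA !map_cat /= et eX perm_cat2l.
by apply/permPl; apply: (perm_catCA (map key X) [:: key t] (map key Y)).
Qed.

Lemma tr_peqA u v : tr D u v -> peqA u v.
Proof.
elim=> {u v} [a b n|u|u v _ h|u v w _ h1 _ h2|u u' v v' _ h1 _ h2].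
- exact: (peq_swap Drefl Dsym [::] n).
- exact: peq_refl.
- exact: peq_sym.
- exact: peq_trans h1 h2.
- exact: peq_cat.
Qed.

Lemma peqA_tr u v : peqA u v -> tr D u v.
Proof.
move=> h; elim: (peq_trg Drefl Dsym h) => {u v h} [a b n|u|u v _ h|u v w _ h1 _ h2|u u' v v' _ h1 _ h2].
- exact: tr_swap.
- exact: tr_refl.
- exact: tr_sym.
- exact: tr_trans h1 h2.
- exact: tr_cat.
Qed.

Lemma lstep_step Dl C s C1 : lstepR C s C1 -> srule s \in Dl -> step D Dl (unl C) (unl C1).
Proof.
case=> _ e [Xs [h1 h2]] hin.
exists (socc s).1, (map fst (sW s)), (map fst Xs); split; first by rewrite -e.
split; first exact: (peqA_tr (peqL_map h1)).
by rewrite /= -map_cat; apply: peqA_tr; apply: peqL_map.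
Qed.

Lemma lrun_star Dl C ss C' : lrun C ss C' ->
  (forall s C1 C2, s \in ss -> lstepR C1 s C2 -> srule s \in Dl) ->
  star D (step D Dl) (unl C) (unl C').
Proof.
elim=> [C1 C2 [e1 e2]|C1 C2 C3 s ss' h1 h2 IH] hD.
  by apply: star_refl; split=> //; apply: peqA_tr; apply: peqL_map.
apply: star_step (lstep_step h1 (hD _ _ _ (mem_head _ _) h1)) _.
by apply: IH => s' Ca Cb sin; apply: hD; rewrite in_cons sin orbT.
Qed.

Lemma star_end (R : conf A Q -> conf A Q -> Prop) c d d' :
  star D R c d -> confeq D d d' -> star D R c d'.
Proof.
elim=> [c1 d1 [e1 e2]|c1 e d1 h1 _ IH] [e3 e4].
  by apply: star_refl; split; [rewrite e1|apply: tr_trans e4].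
exact: star_step h1 (IH (conj e3 e4)).
Qed.

Lemma map_split (T1 T2 : Type) (f : T1 -> T2) (s : seq T1) s1 y s2 :
  map f s = s1 ++ y :: s2 ->
  exists t1 z t2, [/\ s = t1 ++ z :: t2, map f t1 = s1, f z = y & map f t2 = s2].
Proof.
elim: s1 s => [|a s1 IH] [|x s] //= [e1 e2]; first by exists [::], x, s.
have [t1 [z [t2 [-> h1 h2 h3]]]] := IH _ e2.
by exists (x :: t1), z, t2; rewrite /= h1 e1.
Qed.

Lemma uniq_catB (l1 l2 : seq nat) M : uniq l1 -> uniq l2 -> (forall x, x \in l1 -> x < M) ->
  (forall y, y \in l2 -> M <= y) -> uniq (l1 ++ l2).
Proof.
move=> u1 u2 h1 h2; rewrite cat_uniq u1 u2 andbT /=; apply/hasP=> -[y y2 y1].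
by have := h1 _ y1; rewrite ltnNge h2.
Qed.

Lemma lift c rs d : urun c rs d -> forall (C : lconf) N, C.1 = c.1 -> peqA (map fst C.2) c.2 ->
  uniq (map snd C.2) -> (forall z, z \in C.2 -> z.2 < N) ->
  exists ss C', [/\ lrun C ss C', map srule ss = rs, C'.1 = d.1 /\ peqA (map fst C'.2) d.2,
     uniq (map snd (C.2 ++ flatten (map sW ss))) & forall z, z \in flatten (map sW ss) -> N <= z.2].
Proof.
elim=> [c1 d1 f1 f2|c1 e d1 r rs' hst hr IH] C N h1 h2 h3 h4.
  exists [::], C; split=> //=.
  - by apply: lrun_nil; apply: ceq_refl.
  - by split; [rewrite h1|apply: peq_trans f2].
  - by rewrite cats0.
case: hst => rD rp rq [x [hx1 hx2]].
move: r rD rp rq hx1 hx2 hr => [[[p a] w] q] /= rD rp rq hx1 hx2 hr.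
have [//|Y1 [Y2 [eY _ hall hx]]] := @peq_extract _ _ Drefl Dsym [::] (map fst C.2) a x (peq_trans h2 hx1).
have [U1 [al [U2 [eC eU1 eal eU2]]]] := map_split eY.
pose W := zip w (iota N (size w)).
have hW1 : map fst W = w by apply: unzip1_zip; rewrite size_iota.
have hW2 : map snd W = iota N (size w) by apply: unzip2_zip; rewrite size_iota.
pose C1 : lconf := (q, W ++ U1 ++ U2).
have st : lstepR C ((p, a, w, q), al, W) C1.
  split=> //=; first by rewrite hW1 eal h1 -rp.
  exists (U1 ++ U2); split; last exact: peq_refl.
  have hal : all (fun z => ~~ DL al z) U1.
    apply/allP=> z zU; have := allP hall z.1; rewrite /= -eU1 => /(_ (map_f _ zU)).
    by rewrite /DL eal.
  rewrite eC; exact: (peq_bubble DLr DLs _ hal).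
have uC : uniq (map snd C.2) := h3.
rewrite eC map_cat /= in uC.
have uU : uniq (map snd (U1 ++ U2)).
  by move: uC; rewrite map_cat -cat1s uniq_catCA /= => /andP[].
have bU : forall z, z \in U1 ++ U2 -> z.2 < N.
  move=> z zU; apply: h4; rewrite eC mem_cat in_cons.
  by move: zU; rewrite mem_cat => /orP[->|->]; rewrite ?orbT.
have hp1 : peqA (map fst C1.2) e.2.
  rewrite /= !map_cat hW1 eU1 eU2; apply: peq_sym; apply: peq_trans hx2 _.
  by apply: peq_cat (peq_refl _) _.
have hu1 : uniq (map snd C1.2).
  rewrite /= map_cat hW2 uniq_catC; apply: (uniq_catB (M := N)) => //.
  - exact: iota_uniq.
  - by move=> y /mapP [z zU ->]; apply: bU.
  - by move=> y; rewrite mem_iota => /andP[].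
have hb1 : forall z, z \in C1.2 -> z.2 < N + size w.
  move=> z; rewrite /= mem_cat => /orP[zW|zU].
    by move: (map_f snd zW); rewrite hW2 mem_iota => /andP[].
  by apply: leq_trans (bU _ zU) _; rewrite leq_addr.
have [ss1 [C' [hr1 hm [e1 e2] hu hN]]] := IH C1 (N + size w) rq hp1 hu1 hb1.
exists (((p, a, w, q), al, W) :: ss1), C'; split=> //.
- exact: lrun_cons st hr1.
- by rewrite /= hm.
- rewrite /= map_cat; apply: (uniq_catB (M := N)) => //.
  + rewrite map_cat; apply: (uniq_catB (M := N + size w)).
    * by rewrite hW2 iota_uniq.
    * by move: hu; rewrite map_cat cat_uniq => /and3P[].
    * by move=> y; rewrite hW2 mem_iota => /andP[].
    * by move=> y /mapP [z zF ->]; apply: hN.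
  + by move=> y /mapP [z zC ->]; apply: h4.
  + move=> y; rewrite map_cat mem_cat => /orP[|/mapP [z zF ->]].
      by rewrite hW2 mem_iota => /andP[].
    by apply: leq_trans (hN _ zF); rewrite leq_addr.
- move=> z; rewrite /= mem_cat => /orP[zW|zF].
    by move: (map_f snd zW); rewrite hW2 mem_iota => /andP[].
  by apply: leq_trans (hN _ zF); rewrite leq_addr.
Qed.

Lemma star_urun c d : star D (step D Delta) c d -> exists rs, urun c rs d.
Proof.
elim=> [c1 d1 [e1 e2]|c1 e d1 [a [w [x [h1 [h2 h3]]]]] _ [rs hr]].
  by exists [::]; apply: urun_nil => //; apply: tr_peqA.
exists ((c1.1, a, w, e.1) :: rs); apply: urun_cons hr; split=> //.
by exists x; split; apply: tr_peqA.
Qed.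

Lemma exists_min (P : seq (rule A Q) -> Prop) rs : P rs ->
  exists rs0, P rs0 /\ forall rs', P rs' -> size rs0 <= size rs'.
Proof.
move: rs; suff: forall n rs, size rs <= n -> P rs ->
    exists rs0, P rs0 /\ forall rs', P rs' -> size rs0 <= size rs'.
  by move=> h rs; apply: h (leqnn _).
elim=> [|n IH] rs hs hP.
  by exists rs; split=> // rs' _; move: hs; rewrite leqn0 => /eqP->.
case: (classic (exists rs', P rs' /\ size rs' <= n)) => [[rs' [h1 h2]]|H].
  exact: IH h2 h1.
exists rs; split=> // rs' h; case: (leqP (size rs') n) => [hl|hl].
  by exfalso; apply: H; exists rs'.
exact: leq_trans hs hl.
Qed.

Lemma memE C s C1 : lstepR C s C1 -> sW s = [::] -> srule s \in Delta_eps Delta.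
Proof. by case=> hD he _ e; rewrite mem_filter hD andbT he /= e. Qed.

Lemma memT T C s C1 : lstepR C s C1 -> isT T s -> srule s \in Delta_T Delta T.
Proof.
case=> hD he _; rewrite /isT /isTk /key /= => /andP[h1 h2].
rewrite mem_filter hD andbT he /= h2 /=.
by move: h1; case: (sW s).
Qed.

Lemma twins_self a : a \in twins D a.
Proof. by apply/twinsP. Qed.

Lemma main n : forall c rs d, urun c rs d -> size rs <= n ->
  exists Ts, [/\ uniq Ts, {subset Ts <= cls rs} &
    rcomp (Vdash_seq D Delta Ts) (star D (step_eps D Delta)) c d].
Proof.
elim/ltn_ind: n => n IH [p0 u0] rs d hr hs.
pose S := cls rs.
have [rs0 [[hr0 hc0] hmin0]] :=
  @exists_min (fun rs' => urun (p0, u0) rs' d /\ {subset cls rs' <= S}) rs (conj hr (fun z h => h)).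
pose C0 : lconf := (p0, zip u0 (iota 0 (size u0))).
have hfst : map fst C0.2 = u0 by apply: unzip1_zip; rewrite size_iota.
have hsnd : map snd C0.2 = iota 0 (size u0) by apply: unzip2_zip; rewrite size_iota.
have hp0 : peqA (map fst C0.2) u0 by rewrite hfst; apply: peq_refl.
have hu0 : uniq (map snd C0.2) by rewrite hsnd iota_uniq.
have hb0 : forall z, z \in C0.2 -> z.2 < size u0.
  by move=> z zC; move: (map_f snd zC); rewrite hsnd mem_iota add0n.
have [ss0 [C'' [hrun0 hmap [e1 e2] hu _]]] := lift hr0 (C := C0) (N := size u0) erefl hp0 hu0 hb0.
have hunl0 : unl C0 = (p0, u0) by rewrite /unl hfst.
have fr0 : fresh C0 ss0 by rewrite /fresh; apply: (map_uniq hu).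
have M0 : minimal S C0 ss0 C''.
  split=> //.
  - by move=> z; rewrite -(lrun_cls hrun0) hmap; apply: hc0.
  - move=> rs' hr' hc'; rewrite -(size_map srule) hmap; apply: hmin0; split=> //.
    by move: hr'; rewrite hunl0; apply: urun_end.
have hend : confeq D (unl C'') d by split => //; apply: peqA_tr.
have szrs0 : size rs0 <= size rs by apply: hmin0; split.
case hne: (has (fun s => sW s != [::]) ss0); last first.
  exists [::]; split=> //.
  exists (p0, u0); split; first by split=> //; apply: tr_refl.
  rewrite -hunl0; apply: star_end hend; apply: (lrun_star (Dl := Delta_eps Delta) hrun0) => s C1 C2 sin hst.
  apply: (memE hst); move/negbT: hne => /hasPn /(_ s sin); rewrite negbK.
  by move/eqP.
have [E1 [s1 [rest [e0 hE1 hs1]]]] := first_split hne.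
rewrite e0 in hrun0 M0 fr0 hmap.
pose T := twins D (socc s1).1.
have [P' [R' [M1 fr1 hP' hR' p]]] :=
  @sortT (count (isT T) rest) S C0 E1 s1 [::] rest C'' (leqnn _) M0 fr0 hs1 erefl.
case: (M1) => hrun1 hcl1 _.
have [Ca [hEa hrest]] := (lrun_cat C0 E1 ((s1 :: P') ++ R') C'').1 hrun1.
have [Cb [hTb hRb]] := (lrun_cat Ca (s1 :: P') R' C'').1 hrest.
have hurR : urun (unl Cb) (map srule R') d by apply: (urun_end (d := unl C'') e1 e2 (lrun_urun hRb)).
have hsz : size (map srule R') < n.
  apply: leq_trans _ hs; apply: leq_trans _ szrs0.
  have sp : size (P' ++ R') = size rest.
    by rewrite -(size_map key (P' ++ R')) -(perm_size p) size_map.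
  rewrite -hmap !size_map size_cat /= -sp size_cat addnS ltnS.
  by apply: leq_trans (leq_addl _ _) (leq_addl _ _).
have [Ts' [uTs hTs [e [hV he]]]] := IH _ hsz (unl Cb) (map srule R') d hurR (leqnn _).
have TR : T \notin cls (map srule R').
  rewrite (lrun_cls hRb); apply/negP=> /mapP [k]; rewrite mem_filter => /andP[kne /mapP [s sR ek]] eT.
  move/negP: hR'; apply; apply/hasP; exists s => //.
  rewrite /isT /isTk -ek kne /=; rewrite /T in eT *; rewrite eT; exact: twins_self.
exists (T :: Ts'); split.
- by rewrite /= uTs andbT; apply/negP=> /hTs; apply/negP.
- move=> z; rewrite in_cons => /orP[/eqP->|/hTs].
    apply: hcl1; rewrite map_cat lcls_cat mem_cat /= lcls_cons /key /= hs1 /=.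
    by rewrite mem_head orbT.
  rewrite (lrun_cls hRb) => zR; apply: hcl1.
  by rewrite map_cat lcls_cat /= lcls_cons map_cat lcls_cat !mem_cat zR !orbT.
exists e; split=> //; exists (unl Cb); split=> //.
exists (unl Ca); split.
  rewrite -hunl0; apply: (lrun_star (Dl := Delta_eps Delta) hEa) => s C1 C2 sin hst; apply: (memE hst).
  move/hasPn: hE1 => /(_ s sin); rewrite negbK.
  by move/eqP.
case/lrun_consE: hTb => Ca1 [hst1 hP1].
have hT1 : isT T s1 by rewrite /isT /isTk /= hs1 twins_self.
exists (unl Ca1); split; first exact: lstep_step hst1 (memT hst1 hT1).
apply: (lrun_star (Dl := Delta_T Delta T) hP1) => s C1 C2 sin hst; apply: (memT hst).
exact: (allP hP' s sin).
Qed.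

Lemma final c d : star D (step D Delta) c d ->
  exists Ts : seq {set A},
    size Ts <= TI D /\ all (fun T => T \in twinsD D) Ts /\
    rcomp (Vdash_seq D Delta Ts) (star D (step_eps D Delta)) c d.
Proof.
move=> h; have [rs hr] := star_urun h.
have [Ts [uTs hTs hNF]] := main hr (leqnn _).
have sub : {subset Ts <= twinsD D}.
  move=> z /hTs /mapP [r _ ->]; apply/imsetP; by exists r.1.1.2.
exists Ts; split; last by split=> //; apply/allP.
rewrite /TI -(card_uniqP uTs); apply: subset_leq_card; apply/subsetP.
exact: sub.
Qed.

End Runs.

Theorem proposition5p11 (A Q : finType) (D : rel A)
  (Drefl : reflexive D) (Dsym : symmetric D)
  (Delta : seq (rule A Q))
  (Htp : trace_pushdown D Delta) (Hsat : saturated D Delta)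
  (c d : conf A Q) :
  star D (step D Delta) c d ->
  exists Ts : seq {set A},
    size Ts <= TI D /\ all (fun T => T \in twinsD D) Ts /\
    rcomp (Vdash_seq D Delta Ts) (star D (step_eps D Delta)) c d.
Proof. by apply: final. Qed.
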